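(* Let $G=(V,E)$ be a graph and $v\in V$. Then $F_v=\emptyset$ if and only if $(e,e')\in\mathfrak d_v^*$ for all edges $e,e'\in E_v$. Moreover, if $F_v\neq\emptyset$, then $|F_v|\geq 2$.
   Context: All graphs are finite, simple and undirected. For a graph $G=(V,E)$ and $v\in V$, $E_v$ denotes the set of edges incident to $v$. For two distinct adjacent edges $e=(v,u)$, $f=(v,w)$, a square spanned by $e$ and $f$ is a $4$-cycle $v,u,x,w,v$ in $G$ with $x\notin\{v,u,w\}$; $x$ is its top vertex. The square is chordless if neither $(u,w)$ nor $(v,x)$ is an edge of $G$. In a chordless square $v,u,x,w$, the edge $(x,w)$ is the opposite edge of $(v,u)$ and $(x,u)$ is the opposite edge of $(v,w)$ (and vice versa). The relation $\delta(G)\subseteq E\times E$: $(e,f)\in\delta(G)$ iff (i) $e,f$ are distinct adjacent edges and it is not the case that $e$ and $f$ span exactly one square and that square is chordless; or (ii) $e$ and $f$ are opposite edges of a chordless square; or (iii) $e=f$. For a reflexive symmetric relation $R$ on a set, $R^*$ denotes its transitive closure, i.e. the finest equivalence relation containing $R$. Define $\mathfrak d_v=((E_v\times E)\cup(E\times E_v))\cap\delta(G)$, and $\mathfrak d_v^*$ the finest equivalence relation on $E$ containing $\mathfrak d_v$. Let $F_v\subseteq E\setminus E_v$ be the set of edges that are the edges not incident to $v$ of some chordless square spanned by two edges $e,e'\in E_v$ with $(e,e')\notin\mathfrak d_v^*$. *)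

(* Defs.v *)
(* A simple graph on a finite vertex type T is a boolean
   relation adj : rel T, assumed symmetric and irreflexive in the theorem.
   Edges are represented as 2-element vertex sets {x, y} with adj x y. *)
From mathcomp Require Import all_boot.
Set Implicit Arguments. Unset Strict Implicit. Unset Printing Implicit Defensive.

Section Graph.
Variables (T : finType) (adj : rel T).

Definition is_edge (A : {set T}) : bool :=
  [exists x, exists y, adj x y && (A == [set x; y])].

(* tops of the squares spanned by (v,u) and (v,w): vertices x with
   v,u,x,w a 4-cycle and x \notin {v,u,w} *)
Definition sq_tops (v u w : T) : {set T} :=
  [set x | [&& adj u x, adj w x, x != v, x != u & x != w]].

Definition one_chordless_square (v u w : T) : bool :=
  [&& #|sq_tops v u w| == 1, ~~ adj u w & [forall x in sq_tops v u w, ~~ adj v x]].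

Definition delta_adj (e f : {set T}) : bool :=
  [exists v, exists u, exists w,
    [&& adj v u, adj v w, u != w, e == [set v; u], f == [set v; w]
      & ~~ one_chordless_square v u w]].

Definition opposite (e f : {set T}) : bool :=
  [exists a, exists b, exists c, exists d,
    [&& adj a b, adj b c, adj c d, adj d a,
        uniq [:: a; b; c; d], ~~ adj a c, ~~ adj b d,
        e == [set a; b] & f == [set c; d]]].

Definition delta (e f : {set T}) : bool :=
  [&& is_edge e, is_edge f & [|| delta_adj e f, opposite e f | e == f]].

Definition dv (v : T) : rel {set T} :=
  fun e f => delta e f && ((v \in e) || (v \in f)).

(* d_v^* : finest equivalence containing d_v (dv is symmetric, so its
   reflexive-transitive closure is this equivalence; on edges it agrees
   with the equivalence relation on E) *)
Definition dvstar (v : T) : rel {set T} := connect (dv v).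

Definition Fv (v : T) : {set {set T}} :=
  [set g | [exists u, exists w, exists x,
     [&& adj v u, adj v w, u != w, adj u x, adj w x,
         x \notin [:: v; u; w], ~~ adj u w, ~~ adj v x,
         ~~ dvstar v [set v; u] [set v; w]
       & (g == [set u; x]) || (g == [set w; x])]]].

End Graph.

(* Main.v *)
Require Import Defs.
From mathcomp Require Import all_boot.

Lemma edge_at {T : finType} {adj : rel T} (adj_sym : symmetric adj) {v : T} {e} :
  is_edge adj e -> v \in e -> exists u, adj v u /\ e = [set v; u].
Proof.
case/existsP=> x /existsP [y /andP [hxy /eqP ->]].
rewrite !inE => /orP [/eqP ->|/eqP ->]; first by exists y.
by exists x; split; [rewrite adj_sym | rewrite setUC].
Qed.

Lemma edge_of {T : finType} {adj : rel T} {a b : T} :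
  adj a b -> is_edge adj [set a; b].
Proof. by move=> h; apply/existsP; exists a; apply/existsP; exists b; rewrite h eqxx. Qed.

Theorem lemma3p1 (T : finType) (adj : rel T)
    (adj_sym : symmetric adj) (adj_irr : irreflexive adj) (v : T) :
  (Fv adj v = set0 <->
     (forall e e' : {set T}, is_edge adj e -> is_edge adj e' ->
        v \in e -> v \in e' -> dvstar adj v e e'))
  /\ (Fv adj v != set0 -> 2 <= #|Fv adj v|).
Proof.
split; first split.
- move=> hF e e' he he' ve ve'.
  have [u [hu eu]] := edge_at adj_sym he ve.
  have [w [hw ew]] := edge_at adj_sym he' ve'.
  subst e e'.
  have [huw|huw] := eqVneq u w; first by subst; exact: connect0.
  case hd: (dvstar adj v [set v; u] [set v; w]) => //.
  have [oc|noc] := boolP (one_chordless_square adj v u w).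
  + case/and3P: oc => /cards1P [x hx] nuw /forallP hv.
    have xin : x \in sq_tops adj v u w by rewrite hx set11.
    have := hv x; rewrite xin /= => nvx.
    move: xin; rewrite inE => /and5P [hux hwx xv xu xw].
    have : [set u; x] \in Fv adj v.
      rewrite inE; apply/existsP; exists u; apply/existsP; exists w;
      apply/existsP; exists x.
      by rewrite hu hw huw hux hwx nuw nvx hd eqxx !inE (negbTE xv) (negbTE xu) (negbTE xw).
    by rewrite hF inE.
  + have : dv adj v [set v; u] [set v; w].
      rewrite /dv /delta !inE eqxx /= (edge_of hu) (edge_of hw) /= andbT.
      apply/orP; left; apply/existsP; exists v; apply/existsP; exists u;
      apply/existsP; exists w.
      by rewrite hu hw huw !eqxx noc.
    by move=> h; rewrite /dvstar (connect1 h) in hd.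
- move=> H; apply/setP=> g; rewrite [RHS]inE; apply: negbTE; rewrite inE.
  apply/negP => /existsP [u /existsP [w /existsP [x /and5P [hu hw huw _ /and5P [_ _ _ _ /andP [nd _]]]]]].
  by rewrite (H [set v; u] [set v; w]) ?(edge_of hu) ?(edge_of hw) ?set21 in nd.
- case/set0Pn=> g /[dup] hg; rewrite inE =>
    /existsP [u /existsP [w /existsP [x /and5P [hu hw huw hux /and5P [hwx xn nuw nvx /andP [nd _]]]]]].
  have mem : forall g', (g' == [set u; x]) || (g' == [set w; x]) -> g' \in Fv adj v.
    move=> g' hg'; rewrite inE; apply/existsP; exists u; apply/existsP; exists w;
    apply/existsP; exists x; by rewrite hu hw huw hux hwx xn nuw nvx nd hg'.
  have sub : [set [set u; x]; [set w; x]] \subset Fv adj v.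
    by apply/subsetP=> g' /set2P [->|->]; apply: mem; rewrite eqxx ?orbT.
  apply: leq_trans (subset_leq_card sub).
  rewrite cards2.
  have : [set u; x] != [set w; x].
    apply/negP=> /eqP e; move: xn; have : u \in [set w; x] by rewrite -e set21.
    rewrite !inE => /orP [/eqP hx|/eqP hx]; first by rewrite hx eqxx in huw.
    by rewrite hx eqxx orbT.
  by move=> ->.
Qed.
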